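(* Suppose the registers $R_1[j]$, $R_2[j]$, $C_1[j]$ ($j\ge 0$) of the Weakener algorithm (described in the context) are strongly linearizable, and the algorithm is run against a strong adversary. Then for every round $j \ge 0$, with probability at least $1/2$, no process enters round $j+1$.
   Context: Model: an asynchronous shared-memory system of $n\ge 3$ processes $p_0,\dots,p_{n-1}$ that may fail by crashing. A strong adversary is a scheduler that sees the entire history so far, including the results of all coin flips made so far, and chooses adaptively which process takes the next step. A ''strongly linearizable register'' means an implemented register whose implementation is strongly linearizable. Strong linearizability: a set of histories $\mathcal{H}$ is strongly linearizable if there is a function $f$ from the prefix-closure of $\mathcal{H}$ to sequential histories such that (L) for every $H$ in the prefix-closure, $f(H)$ is a linearization of $H$ (a sequential history consistent with the real-time order of non-overlapping operations of $H$ and with the objects' sequential specifications), and (P) whenever $G$ is a prefix of $H$ (both in the prefix-closure), $f(G)$ is a prefix of $f(H)$. Weakener algorithm. Shared registers, for each $j = 0,1,2,\dots$: $R_1[j]$, a multi-writer multi-reader register initialized to $\bot$; $C_1[j]$, a register written only by $p_0$, initialized to $-1$; $R_2[j]$, a register initialized to $\textsc{false}$. Code of $p_i$ for $i \in \{0,1\}$: for rounds $j=0,1,2,\dots$: (Phase 1) write $i$ into $R_1[j]$; if $i=0$, flip a fair coin (outcome in $\{0,1\}$) and write the outcome into $C_1[j]$; (Phase 2) read $R_2[j]$ into local variable $v_1$; if $v_1 = \textsc{false}$, exit the for loop. After the loop: return. Code of $p_i$ for $i \in \{2,\dots,n-1\}$: for rounds $j=0,1,2,\dots$: (Phase 1)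 read $R_1[j]$ into $u_1$; read $R_1[j]$ into $u_2$; read $C_1[j]$ into $c_1$; if $u_1 \ne c_1$ or $u_2 \ne 1-c_1$, exit the for loop; (Phase 2) write $\textsc{true}$ into $R_2[j]$. After the loop: return. *)

(* Defs.v *)
From mathcomp Require Import all_boot all_algebra.
Require Stdlib.Lists.List.
Set Implicit Arguments. Unset Strict Implicit. Unset Printing Implicit Defensive.
Import GRing.Theory Num.Theory.

Inductive value := VBot | VInt of int | VBool of bool | VAck.

Inductive reg := R1 of nat | C1 of nat | R2 of nat.

Definition reg_eqb (r r' : reg) : bool :=
  match r, r' with
  | R1 a, R1 b => a == b
  | C1 a, C1 b => a == b
  | R2 a, R2 b => a == b
  | _, _ => false
  end.

Definition init (r : reg) : value :=
  match r with
  | R1 _ => VBot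
  | C1 _ => VInt (-1)%R
  | R2 _ => VBool false
  end.

Inductive op := Read of reg | Write of reg & value.

Definition op_reg (o : op) : reg :=
  match o with Read x => x | Write x _ => x end.

Inductive action := Invoke of op | Flip | Done.

(* A program maps the local trace (the results of the process' previous
   steps: responses of its operations and coin outcomes, in order) to the
   pair (current round, next action). *)

Fixpoint prog01 (i j : nat) (tr : seq value) : nat * action :=
  match tr with
  | [::] => (j, Invoke (Write (R1 j) (VInt (Posz i))))
  | _ :: tr1 =>
    if i == 0 then
      match tr1 with
      | [::] => (j, Flip)
      | c :: tr2 =>
        match tr2 with
        | [::] => (j, Invoke (Write (C1 j) c))
        | _ :: tr3 =>
          match tr3 with
          | [::] => (j, Invoke (Read (R2 j)))
          | v :: tr4 => if v is VBool false then (j, Done) else prog01 i j.+1 tr4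
          end
        end
      end
    else
      match tr1 with
      | [::] => (j, Invoke (Read (R2 j)))
      | v :: tr2 => if v is VBool false then (j, Done) else prog01 i j.+1 tr2
      end
  end.

Definition check (u1 u2 c1 : value) : bool :=
  match u1, u2, c1 with
  | VInt a, VInt b, VInt c => (a == c) && (b == (1 - c)%R)
  | _, _, _ => false
  end.

Fixpoint prog2 (j : nat) (tr : seq value) : nat * action :=
  match tr with
  | [::] => (j, Invoke (Read (R1 j)))
  | u1 :: tr1 =>
    match tr1 with
    | [::] => (j, Invoke (Read (R1 j)))
    | u2 :: tr2 =>
      match tr2 with
      | [::] => (j, Invoke (Read (C1 j)))
      | c1 :: tr3 =>
        if check u1 u2 c1 then
          match tr3 with
          | [::] => (j, Invoke (Write (R2 j) (VBool true)))
          | _ :: tr4 => prog2 j.+1 tr4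
          end
        else (j, Done)
      end
    end
  end.

Definition prog (p : nat) (tr : seq value) : nat * action :=
  if p < 2 then prog01 p 0 tr else prog2 0 tr.

Inductive event := EInv of nat & op | EResp of nat & value | EFlip of nat & bool.

Definition ev_result (p : nat) (e : event) : option value :=
  match e with
  | EResp q v => if q == p then Some v else None
  | EFlip q b => if q == p then Some (VInt (Posz (nat_of_bool b))) else None
  | EInv _ _ => None
  end.

Definition ltrace (p : nat) (E : seq event) : seq value := pmap (ev_result p) E.

Definition upd_pending (p : nat) (st : option op) (e : event) : option op :=
  match e with
  | EInv q o => if q == p then Some o else st
  | EResp q _ => if q == p then None else st
  | EFlip _ _ => st
  end.

Definition pending (p : nat) (E : seq event) : option op :=
  foldl (upd_pending p) None E.

(* Choices of the adversary at each step: let process p take its next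
   step (of its code), let the (implementation of the) pending operation
   of p respond with a value, or do nothing. *)
Inductive choice := CStep of nat | CResp of nat & value | CIdle.

(* A strong adversary sees the whole execution so far, including all coin
   outcomes. *)
Definition strategy := seq event -> choice.

Definition next_event (n : nat) (A : strategy) (E : seq event) (b : bool)
  : option event :=
  match A E with
  | CStep p =>
    if p < n then
      if pending p E is None then
        match (prog p (ltrace p E)).2 with
        | Invoke o => Some (EInv p o)
        | Flip => Some (EFlip p b)
        | Done => None
        end
      else None
    else None
  | CResp p v =>
    if p < n then (if pending p E is Some _ then Some (EResp p v) else None)
    else None
  | CIdle => None
  end.

Definition is_flip (e : event) : bool := if e is EFlip _ _ then true else false.

Fixpoint run (n : nat) (A : strategy) (cs : seq bool) (k : nat) : seq event :=
  match k with
  | 0 => [::]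
  | k'.+1 =>
    let E := run n A cs k' in
    if next_event n A E (nth false cs (count is_flip E)) is Some e
    then rcons E e else E
  end.

Definition is_exec (n : nat) (A : strategy) (E : seq event) : Prop :=
  exists (cs : seq bool) (k : nat), E = run n A cs k.

(* An operation of E is identified by the position of its invocation. *)
Definition inv_at (E : seq event) (i : nat) : option (nat * op) :=
  match onth E i with
  | Some (EInv p o) => Some (p, o)
  | _ => None
  end.

Definition is_resp_of (p : nat) (e : event) : bool :=
  if e is EResp q _ then q == p else false.

Definition resp_of (E : seq event) (i : nat) : option (nat * value) :=
  match inv_at E i with
  | Some (p, _) =>
    let s := drop i.+1 E in
    let k := find (is_resp_of p) s in
    match onth s k with
    | Some (EResp _ v) => Some (i.+1 + k, v)
    | _ => None
    end
  | None => None
  end.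

Definition upd (mem : reg -> value) (x : reg) (v : value) : reg -> value :=
  fun y => if reg_eqb y x then v else mem y.

Fixpoint legal_from (E : seq event) (mem : reg -> value)
    (S : seq (nat * value)) : Prop :=
  match S with
  | [::] => True
  | (i, r) :: S' =>
    match inv_at E i with
    | Some (_, Read x) => r = mem x /\ legal_from E mem S'
    | Some (_, Write x v) => r = VAck /\ legal_from E (upd mem x v) S'
    | None => False
    end
  end.

Definition linearization_on (x : reg) (E : seq event) (S : seq (nat * value))
  : Prop :=
  [/\ uniq (map fst S),
      (forall i r, List.In (i, r) S ->
         exists p o, inv_at E i = Some (p, o) /\ op_reg o = x),
      (forall i p o k v, inv_at E i = Some (p, o) -> op_reg o = x ->
         resp_of E i = Some (k, v) -> List.In (i, v) S),
      (forall a b, a < b -> b < size S ->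
         ~ (exists k v, resp_of E (nth (0, VBot) S b).1 = Some (k, v)
                        /\ k < (nth (0, VBot) S a).1))
    & legal_from E init S].

Definition registers_strongly_linearizable (n : nat) (A : strategy) : Prop :=
  forall x : reg, exists f : seq event -> seq (nat * value),
    (forall E, is_exec n A E -> linearization_on x E (f E)) /\
    (forall G H, is_exec n A G -> is_exec n A H ->
       (exists s, H = G ++ s) -> exists s', f H = f G ++ s').

Definition entered (n : nat) (E : seq event) (r : nat) : bool :=
  [exists p : 'I_n, r <= (prog p (ltrace p E)).1].

(* At most k coins are
   flipped in k steps, so uniform k-bit strings give the exact law. *)
Definition prob_none_within (n : nat) (A : strategy) (j k : nat) : rat :=
  (#|[pred cs : k.-tuple bool | ~~ entered n (run n A cs k) j.+1]|)%:R
  / (2 ^ k)%:R.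

(* Main.v *)
Require Import Defs.
From mathcomp Require Import all_boot all_algebra.
Import GRing.Theory Num.Theory.
From mathcomp Require Import zify lra.
Set Implicit Arguments. Unset Strict Implicit. Unset Printing Implicit Defensive.

Definition ev0 := EFlip 0 false.

Definition Vc n A (cs : seq bool) (E : seq event) :=
  forall i, (i < size E)%N ->
    next_event n A (take i E) (nth false cs (count is_flip (take i E))) = Some (nth ev0 E i).

Lemma run_S n A cs t : run n A cs t.+1 =
  let E := run n A cs t in
  if next_event n A E (nth false cs (count is_flip E)) is Some e then rcons E e else E.
Proof. by []. Qed.

Lemma Vc_run n A cs t : Vc n A cs (run n A cs t).
Proof.
elim: t => [|t IH] i //=.
case H: next_event => [e|]; last exact: IH.
rewrite size_rcons ltnS leq_eqVlt => /orP [/eqP ->|lt].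
  by rewrite -cats1 take_size_cat // nth_cat ltnn subnn.
by rewrite -cats1 takel_cat ?nth_cat ?lt ?(ltnW lt) // IH.
Qed.

Lemma run_prefix n A cs t t' : (t <= t')%N -> exists s, run n A cs t' = run n A cs t ++ s.
Proof.
elim: t' => [|t' IH]; first by rewrite leqn0 => /eqP ->; exists [::]; rewrite cats0.
rewrite leq_eqVlt => /orP [/eqP ->|]; first by exists [::]; rewrite cats0.
rewrite ltnS => /IH [s Hs]; rewrite run_S /=.
case: next_event => [e|]; last by exists s.
by exists (rcons s e); rewrite Hs rcons_cat.
Qed.

Lemma run_take n A cs t i : (i <= size (run n A cs t))%N ->
  exists t', (t' <= t)%N /\ run n A cs t' = take i (run n A cs t).
Proof.
elim: t i => [|t IH] i /=.
  by move=> _; exists 0; case: i.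
case H: next_event => [e|]; last by move/IH => [t' [le Ht]]; exists t'; split => //; apply: leqW.
rewrite size_rcons leq_eqVlt => /orP [/eqP ->|].
  by exists t.+1; rewrite take_oversize ?size_rcons // run_S /= H.
rewrite ltnS => le; rewrite -cats1 takel_cat //.
by have [t' [le' Ht]] := IH _ le; exists t'; split => //; apply: leqW.
Qed.

Lemma size_run n A cs t : (size (run n A cs t) <= t)%N.
Proof.
elim: t => [//|t IH]; rewrite run_S /=.
case: next_event => [e|]; first by rewrite size_rcons.
exact: leqW.
Qed.

Lemma ND n A E : (forall b b', next_event n A E b = next_event n A E b') \/
  (exists p, forall b, next_event n A E b = Some (EFlip p b)).
Proof.
rewrite /next_event; case: (A E) => [p|p v|]; try by left.
case: (p < n)%N; last by left.
case: pending => [o|]; first by left.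
case: (prog p (ltrace p E)).2 => [o| |]; try by left.
by right; exists p.
Qed.

Lemma count_run_mono n A cs t : (count is_flip (run n A cs t) <= count is_flip (run n A cs t.+1))%N.
Proof. by rewrite run_S /=; case: next_event => // e; rewrite -cats1 count_cat leq_addr. Qed.

Lemma run_agree n A cs cs' t :
  (forall i, (i < count is_flip (run n A cs t))%N -> nth false cs i = nth false cs' i) ->
  run n A cs t = run n A cs' t.
Proof.
elim: t => [//|t IH] H.
have IH' := IH (fun i lt => H i (leq_trans lt (count_run_mono _ _ _ _))).
rewrite !run_S /= -IH'.
case: (ND n A (run n A cs t)) => [Hb|[p Hp]].
  by rewrite (Hb _ (nth false cs' (count is_flip (run n A cs t)))).
rewrite !Hp; congr rcons; congr EFlip; apply: H.
by rewrite run_S /= Hp -cats1 count_cat /= addn1.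
Qed.

Definition ev_proc (e : event) : nat :=
  match e with EInv q _ => q | EResp q _ => q | EFlip q _ => q end.

Definition V n A (E : seq event) :=
  forall i, (i < size E)%N -> exists b, next_event n A (take i E) b = Some (nth ev0 E i).

Lemma Vc_V n A cs E : Vc n A cs E -> V n A E.
Proof. by move=> H i lt; eexists; apply: H. Qed.

Lemma V_take n A E i : V n A E -> V n A (take i E).
Proof.
move=> H k; rewrite size_take; case: (ltnP i (size E)) => [ltiE lt|leEi lt].
  by rewrite take_takel ?(ltnW lt) // nth_take //; apply: H; apply: ltn_trans ltiE.
by rewrite (take_oversize leEi); apply: H.
Qed.

Lemma V_rcons n A E e : V n A (rcons E e) -> V n A E /\ exists b, next_event n A E b = Some e.
Proof.
move=> H; split; last first.
  by have := H (size E); rewrite size_rcons ltnSn -cats1 take_size_cat // nth_cat ltnn subnn; apply.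
have := @V_take n A _ (size E) H; by rewrite -cats1 take_size_cat.
Qed.

Lemma ltrace_cat p E s : ltrace p (E ++ s) = ltrace p E ++ ltrace p s.
Proof. exact: pmap_cat. Qed.

Lemma ltrace_rcons p E e : ltrace p (rcons E e) =
  ltrace p E ++ (if ev_result p e is Some v then [:: v] else [::]).
Proof. by rewrite -cats1 ltrace_cat /ltrace /=; case: ev_result. Qed.

Lemma pending_rcons p E e : pending p (rcons E e) = upd_pending p (pending p E) e.
Proof. exact: foldl_rcons. Qed.

Lemma ltrace_nil p s : all (fun e => ev_proc e != p) s -> ltrace p s = [::].
Proof.
elim: s => //= e s IH /andP [ne /IH]; rewrite /ltrace /= => ->.
by case: e ne => q x /= ne; rewrite ?(negbTE ne).
Qed.

Lemma ltrace_take_prefix p E i :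
  ltrace p (take i E) = take (size (ltrace p (take i E))) (ltrace p E).
Proof. by rewrite -{3}(cat_take_drop i E) ltrace_cat take_size_cat. Qed.

Lemma ltrace_take_mono p E i i' : (i <= i')%N ->
  (size (ltrace p (take i E)) <= size (ltrace p (take i' E)))%N.
Proof.
move=> le; rewrite -(take_takel E le) -{2}(cat_take_drop i (take i' E)) ltrace_cat size_cat.
exact: leq_addr.
Qed.

Lemma NE n A E b e : next_event n A E b = Some e ->
  match e with
  | EInv p o => (p < n)%N /\ pending p E = None /\ (prog p (ltrace p E)).2 = Invoke o
  | EFlip p b' => (p < n)%N /\ pending p E = None /\ (prog p (ltrace p E)).2 = Flip /\ b' = b
  | EResp p v => (p < n)%N /\ exists o, pending p E = Some o
  end.
Proof.
rewrite /next_event; case: (A E) => [p|p v|] //.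
  case: ltnP => // lt; case Hp: pending => [o|] //.
  by case Ha: (prog p (ltrace p E)).2 => [o| |] // [<-].
case: ltnP => // lt; case Hp: pending => [o|] // [<-]; split => //; by exists o.
Qed.

Lemma INV n A E p o : V n A E -> pending p E = Some o -> (prog p (ltrace p E)).2 = Invoke o.
Proof.
elim/last_ind: E o => [//|E e IH] o /V_rcons [VE [b Hb]].
have := NE Hb; rewrite pending_rcons ltrace_rcons.
case: e Hb => [q o'|q v|q b'] Hb /=.
- move=> [_ [Hq Ha]]; case: eqP => [? [<-]|_ ]; first by subst; rewrite cats0.
  by rewrite cats0; apply: IH.
- by move=> _; case: eqP => // _; rewrite cats0; apply: IH.
- move=> [_ [Hq _]]; case: eqP => [<-|_]; first by rewrite Hq.
  by rewrite cats0; apply: IH.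
Qed.

Lemma LI n A E p o : V n A E -> pending p E = Some o ->
  exists i, [/\ (i < size E)%N, nth ev0 E i = EInv p o & all (fun e => ev_proc e != p) (drop i.+1 E)].
Proof.
elim/last_ind: E o => [//|E e IH] o /V_rcons [VE [b Hb]].
have := NE Hb; rewrite pending_rcons.
have lift : forall i, (i < size E)%N -> ev_proc e != p -> nth ev0 E i = EInv p o ->
   all (fun e => ev_proc e != p) (drop i.+1 E) ->
   exists i, [/\ (i < size (rcons E e))%N, nth ev0 (rcons E e) i = EInv p o
      & all (fun e => ev_proc e != p) (drop i.+1 (rcons E e))].
  move=> i lt ne H1 H2; exists i; split; first by rewrite size_rcons ltnS ltnW.
    by rewrite -cats1 nth_cat lt.
  rewrite -cats1 drop_cat; case: ltnP => h; first by rewrite all_cat H2 /= ne.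
  have -> : i.+1 - size E = 0 by apply/eqP; rewrite subn_eq0.
  by rewrite /= ne.
case: e Hb lift => [q o'|q v|q b'] Hb lift /=.
- move=> _; case: (eqVneq q p) => [-> [<-]|ne Hp]; last first.
    by have [i [lt H1 H2]] := IH _ VE Hp; exact: (lift i lt ne H1 H2).
    exists (size E); split; first by rewrite size_rcons.
      by rewrite -cats1 nth_cat ltnn subnn.
    by rewrite drop_oversize // size_rcons.
- move=> _; case: (eqVneq q p) => // ne Hp.
  by have [i [lt H1 H2]] := IH _ VE Hp; exact: (lift i lt ne H1 H2).
- move=> [_ [Hq _]]; case: (eqVneq q p) => [<-|ne]; first by rewrite Hq.
  move=> Hp; by have [i [lt H1 H2]] := IH _ VE Hp; exact: (lift i lt ne H1 H2).
Qed.

Lemma onth_nth' T (x0 : T) s i : (i < size s)%N -> onth s i = Some (nth x0 s i).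
Proof. by move=> lt; rewrite onthE (nth_map x0). Qed.

Lemma TE p E l : (l < size (ltrace p E))%N -> exists r,
  [/\ (r < size E)%N, ltrace p (take r E) = take l (ltrace p E)
    & ev_result p (nth ev0 E r) = Some (nth VBot (ltrace p E) l)].
Proof.
elim/last_ind: E => [//|E e IH]; rewrite ltrace_rcons size_cat => lt.
case: (ltnP l (size (ltrace p E))) => [lt'|ge].
  have [r [rlt Hr Hv]] := IH lt'; exists r; split.
  - by rewrite size_rcons ltnS ltnW.
  - by rewrite -cats1 takel_cat ?(ltnW rlt) // Hr takel_cat ?(ltnW lt').
  - by rewrite -cats1 nth_cat rlt Hv nth_cat lt'.
move: lt; case He: (ev_result p e) => [v|] /=; last by rewrite addn0 ltnNge ge.
rewrite addn1 ltnS => le; have eq : l = size (ltrace p E) by apply/eqP; rewrite eqn_leq le ge.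
exists (size E); split; first by rewrite size_rcons.
- by rewrite -cats1 take_size_cat // eq take_size_cat.
- by rewrite -cats1 nth_cat ltnn subnn He eq nth_cat ltnn subnn.
Qed.

Lemma RESP E i r p o v : (i < r)%N -> (r < size E)%N -> nth ev0 E i = EInv p o ->
  all (fun e => ev_proc e != p) (drop i.+1 (take r E)) -> nth ev0 E r = EResp p v ->
  inv_at E i = Some (p, o) /\ resp_of E i = Some (r, v).
Proof.
move=> ir rE Hi Hall Hr.
have iE : (i < size E)%N by apply: ltn_trans rE.
have HI : inv_at E i = Some (p, o) by rewrite /inv_at (onth_nth' ev0) // Hi.
split => //; rewrite /resp_of HI.
have -> : drop i.+1 E = drop i.+1 (take r E) ++ drop r E.
  rewrite -{1}(cat_take_drop r E) drop_cat size_take rE; case: ltnP => // h.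
  have -> : i.+1 = r by apply/eqP; rewrite eqn_leq ir h.
  rewrite subnn drop0 (@drop_oversize _ r (take r E)) ?size_take ?rE //.
have hs : has (is_resp_of p) (drop i.+1 (take r E)) = false.
  apply/negbTE; rewrite -all_predC; apply: sub_all Hall => e /=.
  by case: e => //= q _ ne; rewrite ne.
rewrite find_cat hs (drop_nth ev0 rE) Hr /= eqxx addn0 onth_cat ltnn subnn /=.
by rewrite size_drop size_take rE; congr (Some (_, _)); lia.
Qed.

Lemma TO n A E p l o : V n A E -> (l < size (ltrace p E))%N ->
  (prog p (take l (ltrace p E))).2 = Invoke o ->
  exists i r, [/\ (i < r)%N, (r < size E)%N, inv_at E i = Some (p, o),
     resp_of E i = Some (r, nth VBot (ltrace p E) l)
     & ltrace p (take i E) = take l (ltrace p E) /\ ltrace p (take r E) = take l (ltrace p E)].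
Proof.
move=> VE lt Ha; have [r [rlt Hr Hv]] := TE lt.
have [b Hb] := VE r rlt; have := NE Hb.
case Her: (nth ev0 E r) Hv => [q o'|q v|q b'] //=; case: eqP => // Hq [<-]; subst q.
- move=> [_ [o'' Hp]].
  have := INV (V_take (i:=r) VE) Hp; rewrite Hr Ha => -[Heq]; subst o''.
  have [i [ilt Hi Hall]] := LI (V_take (i:=r) VE) Hp.
  rewrite size_take rlt in ilt.
  have [HI HR] := RESP ilt rlt (etrans (esym (nth_take ev0 ilt E)) Hi) Hall Her.
  exists i, r; split => //.
  rewrite -Hr -(cat_take_drop i.+1 (take r E)) ltrace_cat (ltrace_nil Hall) cats0.
  have Hi' : nth ev0 E i = EInv p o by rewrite -(nth_take ev0 ilt E).
  by rewrite take_takel // (take_nth ev0 (leq_trans ilt (ltnW rlt))) ltrace_rcons Hi' /= cats0.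
- by move=> [_ [_ [Hf _]]]; move: Hf; rewrite Hr Ha.
Qed.

Lemma TF n A E p l : V n A E -> (l < size (ltrace p E))%N ->
  (prog p (take l (ltrace p E))).2 = Flip ->
  exists r b, [/\ (r < size E)%N, nth ev0 E r = EFlip p b,
     nth VBot (ltrace p E) l = VInt (Posz (nat_of_bool b)) & ltrace p (take r E) = take l (ltrace p E)].
Proof.
move=> VE lt Ha; have [r [rlt Hr Hv]] := TE lt.
have [b Hb] := VE r rlt; have := NE Hb.
case Her: (nth ev0 E r) Hv => [q o'|q v|q b'] //=; case: eqP => // Hq [<-]; subst q.
- move=> [_ [o'' Hp]].
  by have := INV (V_take (i:=r) VE) Hp; rewrite Hr Ha.
- by move=> _; exists r, b'.
Qed.

Definition nf (x : value) := if x is VBool false then false else true.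

Lemma p0_step j0 x1 x2 x3 x4 t : prog01 0 j0 [:: x1, x2, x3, x4 & t] =
  if nf x4 then prog01 0 j0.+1 t else (j0, Done).
Proof. by case: x4 => // -[]. Qed.

Lemma p1_step i j0 x1 x2 t : i != 0 -> prog01 i j0 [:: x1, x2 & t] =
  if nf x2 then prog01 i j0.+1 t else (j0, Done).
Proof. by case: i => // i _; case: x2 => // -[]. Qed.

Lemma p0_flip j0 tr r : prog01 0 j0 tr = (r, Flip) ->
  (size tr + 4 * j0 = 4 * r + 1)%N /\
  exists tr' x, tr = rcons tr' x /\ prog01 0 j0 tr' = (r, Invoke (Write (R1 r) (VInt 0))).
Proof.
have [N] := ubnP (size tr); elim: N tr j0 => // N IH tr j0 Hsz.
case: tr Hsz => [|x1 [|x2 [|x3 [|x4 tr4]]]] Hsz; try by case.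
- case=> <-; split; first by simpl; lia.
  by exists [::], x1.
- rewrite p0_step; case: ifP => // nx4.
  move/IH => [|Hs [tr' [x [Htr Ht]]]]; first by simpl in Hsz; lia.
  split; first by simpl; lia.
  by rewrite Htr; exists [:: x1, x2, x3, x4 & tr'], x; rewrite p0_step nx4.
Qed.

Lemma p0_C1 j0 tr r y w : prog01 0 j0 tr = (r, Invoke (Write (C1 y) w)) ->
  exists tr', tr = rcons tr' w /\ prog01 0 j0 tr' = (y, Flip).
Proof.
have [N] := ubnP (size tr); elim: N tr j0 => // N IH tr j0 Hsz.
case: tr Hsz => [|x1 [|x2 [|x3 [|x4 tr4]]]] Hsz; try by case.
- by case=> _ <- <-; exists [:: x1].
- rewrite p0_step; case: ifP => // nx4.
  move/IH => [|tr' [Htr Ht]]; first by simpl in Hsz; lia.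
  by rewrite Htr; exists [:: x1, x2, x3, x4 & tr']; rewrite p0_step nx4.
Qed.

Lemma p0_R1 j0 tr r y v : prog01 0 j0 tr = (r, Invoke (Write (R1 y) v)) ->
  v = VInt 0 /\ (size tr + 4 * j0 = 4 * y)%N.
Proof.
have [N] := ubnP (size tr); elim: N tr j0 => // N IH tr j0 Hsz.
case: tr Hsz => [|x1 [|x2 [|x3 [|x4 tr4]]]] Hsz; try by case.
- by case=> _ <- <-; split => //; rewrite /= muln0.
- rewrite p0_step; case: ifP => // nx4.
  move/IH => [|-> Hs]; first by simpl in Hsz; lia.
  by split => //; simpl; lia.
Qed.

Lemma p01_R2 i j0 tr r y v : prog01 i j0 tr <> (r, Invoke (Write (R2 y) v)).
Proof.
case: (eqVneq i 0) => [->|ni]; have [N] := ubnP (size tr); elim: N tr j0 => // N IH tr j0 Hsz.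
  case: tr Hsz => [|x1 [|x2 [|x3 [|x4 tr4]]]] Hsz; try by case.
  rewrite p0_step; case: ifP => // nx4; apply: IH; simpl in Hsz; lia.
case: tr Hsz => [|x1 [|x2 tr2]] Hsz; try by rewrite /=; case: eqP ni.
rewrite p1_step //; case: ifP => // nx2; apply: IH; simpl in Hsz; lia.
Qed.

Lemma p1_C1 j0 tr r y v : prog01 1 j0 tr <> (r, Invoke (Write (C1 y) v)).
Proof.
have [N] := ubnP (size tr); elim: N tr j0 => // N IH tr j0 Hsz.
case: tr Hsz => [|x1 [|x2 tr2]] Hsz //.
rewrite p1_step //; case: ifP => // nx2; apply: IH; simpl in Hsz; lia.
Qed.

Lemma p1_R1 j0 tr r y v : prog01 1 j0 tr = (r, Invoke (Write (R1 y) v)) ->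
  v = VInt 1 /\ (size tr + 2 * j0 = 2 * y)%N.
Proof.
have [N] := ubnP (size tr); elim: N tr j0 => // N IH tr j0 Hsz.
case: tr Hsz => [|x1 [|x2 tr2]] Hsz; try by case.
- by case=> _ <- <-; split => //; rewrite /= muln0.
- rewrite p1_step //; case: ifP => // nx2.
  move/IH => [|-> Hs]; first by simpl in Hsz; lia.
  by split => //; simpl; lia.
Qed.

Lemma p01_round i j0 j tr : (j0 <= j)%N -> (j < (prog01 i j0 tr).1)%N ->
  exists l, [/\ (l < size tr)%N, (prog01 i j0 (take l tr)).2 = Invoke (Read (R2 j))
           & nf (nth VBot tr l)].
Proof.
case: (eqVneq i 0) => [->|ni]; have [N] := ubnP (size tr); elim: N tr j0 => // N IH tr j0 Hsz le.
  case: tr Hsz => [|x1 [|x2 [|x3 [|x4 tr4]]]] Hsz; try by rewrite /= ltnNge le.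
  rewrite p0_step; case: ifP => nx4; last by rewrite /= ltnNge le.
  case: (eqVneq j0 j) => [<-|nj] Hr.
    by exists 3; split => //.
  have [|||l [lt Ha Hn]] := IH tr4 j0.+1; first (by simpl in Hsz; lia); first (by lia); first by [].
  exists l.+4; split => //.
  by have -> : take l.+4 [:: x1, x2, x3, x4 & tr4] = [:: x1, x2, x3, x4 & take l tr4] by []; rewrite p0_step nx4.
case: tr Hsz => [|x1 [|x2 tr2]] Hsz.
- by rewrite /= ltnNge le.
- by rewrite /=; case: eqP ni => //= _ _; rewrite ltnNge le.
rewrite p1_step //; case: ifP => nx2; last by rewrite /= ltnNge le.
case: (eqVneq j0 j) => [<-|nj] Hr.
  by exists 1; split => //=; case: eqP ni.
have [|||l [lt Ha Hn]] := IH tr2 j0.+1; first (by simpl in Hsz; lia); first (by lia); first by [].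
exists l.+2; split => //.
by have -> : take l.+2 [:: x1, x2 & tr2] = [:: x1, x2 & take l tr2] by []; rewrite p1_step // nx2.
Qed.

Lemma p2_step j0 u1 u2 c1 x t : prog2 j0 [:: u1, u2, c1, x & t] =
  if check u1 u2 c1 then prog2 j0.+1 t else (j0, Done).
Proof. by rewrite /=; case: check. Qed.

Lemma p2_noW j0 tr r y v : (prog2 j0 tr <> (r, Invoke (Write (R1 y) v))) /\
  (prog2 j0 tr <> (r, Invoke (Write (C1 y) v))).
Proof.
have [N] := ubnP (size tr); elim: N tr j0 => // N IH tr j0 Hsz.
case: tr Hsz => [|x1 [|x2 [|x3 [|x4 tr4]]]] Hsz; try by split; case.
  by split; rewrite /=; case: check.
rewrite p2_step; case: ifP => // _; apply: IH; simpl in Hsz; lia.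
Qed.

Lemma p2_R2 j0 tr r y w : prog2 j0 tr = (r, Invoke (Write (R2 y) w)) ->
  exists t3 u1 u2 c1, [/\ tr = t3 ++ [:: u1; u2; c1],
    (prog2 j0 t3).2 = Invoke (Read (R1 y)),
    (prog2 j0 (t3 ++ [:: u1])).2 = Invoke (Read (R1 y)),
    (prog2 j0 (t3 ++ [:: u1; u2])).2 = Invoke (Read (C1 y)) & check u1 u2 c1].
Proof.
have [N] := ubnP (size tr); elim: N tr j0 => // N IH tr j0 Hsz.
case: tr Hsz => [|x1 [|x2 [|x3 [|x4 tr4]]]] Hsz; try by case.
  rewrite /=; case: ifP => // ch [_ <- _].
  by exists [::], x1, x2, x3.
rewrite p2_step; case: ifP => // ch.
move/IH => [|t3 [u1 [u2 [c1 [Ht H1 H2 H3 Hc]]]]]; first by simpl in Hsz; lia.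
exists [:: x1, x2, x3, x4 & t3], u1, u2, c1; split => //; first by rewrite Ht.
- by rewrite p2_step ch.
- by rewrite cat_cons !cat_cons p2_step ch.
- by rewrite !cat_cons p2_step ch.
Qed.

Lemma p2_round j0 j tr : (j0 <= j)%N -> (j < (prog2 j0 tr).1)%N ->
  exists l w, (l < size tr)%N /\ (prog2 j0 (take l tr)).2 = Invoke (Write (R2 j) w).
Proof.
have [N] := ubnP (size tr); elim: N tr j0 => // N IH tr j0 Hsz le.
case: tr Hsz => [|x1 [|x2 [|x3 [|x4 tr4]]]] Hsz; try by rewrite /= ltnNge le.
  by rewrite /=; case: check => /=; rewrite ltnNge le.
rewrite p2_step; case: ifP => ch; last by rewrite /= ltnNge le.
case: (eqVneq j0 j) => [<-|nj] Hr.
  by exists 3, (VBool true); split => //=; rewrite ch.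
have [|||l [w [lt Ha]]] := IH tr4 j0.+1; first (by simpl in Hsz; lia); first (by lia); first by [].
exists l.+4, w; split => //.
by have -> : take l.+4 [:: x1, x2, x3, x4 & tr4] = [:: x1, x2, x3, x4 & take l tr4] by []; rewrite p2_step ch.
Qed.

Definition wvi (E : seq event) (y : reg) (i : nat) : option value :=
  match inv_at E i with
  | Some (_, Write x v) => if reg_eqb y x then Some v else None
  | _ => None
  end.
Definition wv E y (s : nat * value) := wvi E y s.1.

Lemma reg_eqb_eq x y : reg_eqb x y -> x = y.
Proof. by case: x; case: y => //= a b /eqP ->. Qed.

Lemma reg_eqb_refl x : reg_eqb x x.
Proof. by case: x => /=. Qed.

Lemma LEG E mem S a i r p y : legal_from E mem S -> (a < size S)%N ->
  nth (0, VBot) S a = (i, r) -> inv_at E i = Some (p, Read y) ->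
  r = last (mem y) (pmap (wv E y) (take a S)).
Proof.
elim: S mem a => [//|[i0 r0] S IH] mem a /=.
case Hi0 : (inv_at E i0) => [[p0 [x|x v]]|] // [H1 H2].
- case: a => [_ [<- <-]|a lt Hn Hi]; first by rewrite Hi0 => -[_ <-].
  by rewrite (IH _ _ H2 lt Hn Hi) /wv /= /wvi Hi0.
- case: a => [_ [<- <-]|a lt Hn Hi]; first by rewrite Hi0.
  rewrite (IH _ _ H2 lt Hn Hi) /wv /= /wvi Hi0 /upd.
  by case: (reg_eqb y x).
Qed.

Lemma In_nth' T (d x : T) s : List.In x s -> exists a, (a < size s)%N /\ nth d s a = x.
Proof.
elim: s => [//|z s IH] /= [->|/IH [a [lt H]]]; first by exists 0.
by exists a.+1.
Qed.

Lemma nth_In' T (d : T) s a : (a < size s)%N -> List.In (nth d s a) s.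
Proof.
elim: s a => [//|z s IH] [|a] //= lt; first by left.
by right; apply: IH.
Qed.

Lemma inv_at_size E i p o : inv_at E i = Some (p, o) -> (i < size E)%N.
Proof.
rewrite /inv_at; case: (ltnP i (size E)) => // le.
by rewrite onth_default.
Qed.

Lemma inv_at_cat E s i : (i < size E)%N -> inv_at (E ++ s) i = inv_at E i.
Proof. by move=> lt; rewrite /inv_at onth_cat lt. Qed.

Lemma pmap_wv_cat E s y S :
  (forall i r, List.In (i, r) S -> (i < size E)%N) ->
  pmap (wv (E ++ s) y) S = pmap (wv E y) S.
Proof.
elim: S => [//|[i r] S IH] H /=.
rewrite IH; last by move=> i' r' Hin; apply: (H i' r'); right.
by rewrite /wv /wvi /= inv_at_cat //; apply: (H i r); left.
Qed.

Lemma RT x E S a1 a2 i1 u1 i2 u2 r1 w : linearization_on x E S ->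
  (a1 < size S)%N -> (a2 < size S)%N ->
  nth (0, VBot) S a1 = (i1, u1) -> nth (0, VBot) S a2 = (i2, u2) ->
  resp_of E i1 = Some (r1, w) -> (i1 < r1)%N -> (r1 < i2)%N -> (a1 < a2)%N.
Proof.
move=> [_ _ _ Hrt _] l1 l2 H1 H2 Hr ir ri.
case: (ltngtP a1 a2) => // [lt|eq].
  exfalso; apply: (Hrt a2 a1 lt l1); exists r1, w; by rewrite H1 H2.
by move: H1; rewrite eq H2 => -[e _]; move: ir ri; rewrite e; lia.
Qed.

Lemma inv_at_nth E i p o : inv_at E i = Some (p, o) -> nth ev0 E i = EInv p o.
Proof.
move=> H; have lt := inv_at_size H; move: H.
by rewrite /inv_at (onth_nth' ev0 lt); case: (nth ev0 E i) => // q o' [-> ->].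
Qed.

Lemma V_inv n A E i p o : V n A E -> inv_at E i = Some (p, o) ->
  [/\ (p < n)%N, pending p (take i E) = None & (prog p (ltrace p (take i E))).2 = Invoke o].
Proof.
move=> VE H; have [b Hb] := VE i (inv_at_size H).
by have := NE Hb; rewrite (inv_at_nth H) => -[? [? ?]].
Qed.

Lemma prog_lt2 p tr : (p < 2)%N -> prog p tr = prog01 p 0 tr.
Proof. by rewrite /prog => ->. Qed.
Lemma prog_ge2 p tr : (2 <= p)%N -> prog p tr = prog2 0 tr.
Proof. by move=> H; rewrite /prog ltnNge H. Qed.

Lemma pair_eta (x : nat * action) a : x.2 = a -> x = (x.1, a).
Proof. by case: x => ? ? /= ->. Qed.

Lemma W1 n A E i q y v : V n A E -> inv_at E i = Some (q, Write (R1 y) v) ->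
  (q = 0 /\ v = VInt 0 /\ size (ltrace 0 (take i E)) = 4 * y)%N \/
  (q = 1 /\ v = VInt 1 /\ size (ltrace 1 (take i E)) = 2 * y)%N.
Proof.
move=> VE H; have [_ _ Ha] := V_inv VE H.
case: (ltnP q 2) => [lt|ge]; last first.
  by move: Ha; rewrite prog_ge2 // => /pair_eta; case: (p2_noW 0 (ltrace q (take i E)) (prog2 0 (ltrace q (take i E))).1 y v).
move: Ha; rewrite prog_lt2 // => /pair_eta.
case: q lt H => [|[|]] // _ H.
  by move/p0_R1 => [-> Hs]; left; split => //; split => //; lia.
by move/p1_R1 => [-> Hs]; right; split => //; split => //; lia.
Qed.

Lemma pend_none q o s : foldl (upd_pending q) (Some o) s = None -> ltrace q s <> [::].
Proof.
elim: s o => [//|e s IH] o /=; rewrite /ltrace /=.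
case He: (ev_result q e) => [v|] //.
case: e He => [q' o'|q' v|q' b] /=; case: eqP => // _ _; apply: IH.
Qed.

Lemma pend_grow E a b q o : (a <= b)%N -> pending q (take a E) = Some o ->
  pending q (take b E) = None ->
  (size (ltrace q (take a E)) < size (ltrace q (take b E)))%N.
Proof.
move=> le Ha Hb.
have -> : take b E = take a E ++ drop a (take b E) by rewrite -{1}(cat_take_drop a (take b E)) take_takel.
move: Hb; rewrite -{1}(cat_take_drop a (take b E)) take_takel // /pending foldl_cat.
rewrite -/(pending q (take a E)) Ha => /pend_none.
rewrite ltrace_cat size_cat; case: (ltrace q _) => //= *; lia.
Qed.

Lemma inv_no_repeat n A E i i' q o o' : V n A E -> inv_at E i = Some (q, o) ->
  inv_at E i' = Some (q, o') -> (i < i')%N ->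
  (size (ltrace q (take i E)) < size (ltrace q (take i' E)))%N.
Proof.
move=> VE H H' lt.
have [_ Hp _] := V_inv VE H; have [_ Hp' _] := V_inv VE H'.
have ltE := inv_at_size H.
have Hs : take i.+1 E = rcons (take i E) (EInv q o) by rewrite (take_nth ev0 ltE) (inv_at_nth H).
have := @pend_grow E i.+1 i' q o lt.
rewrite Hs pending_rcons Hp /= eqxx ltrace_rcons /= cats0 => /(_ erefl Hp').
done.
Qed.

Lemma W2 n A E i i' q y v v' : V n A E -> inv_at E i = Some (q, Write (R1 y) v) ->
  inv_at E i' = Some (q, Write (R1 y) v') -> i = i'.
Proof.
move=> VE H H'.
have S : size (ltrace q (take i E)) = size (ltrace q (take i' E)).
  case: (W1 VE H) => [[e1 [_ s1]]|[e1 [_ s1]]];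
  case: (W1 VE H') => [[e2 [_ s2]]|[e2 [_ s2]]]; subst; rewrite ?s1 ?s2 //.
case: (ltngtP i i') => // lt.
  by have := inv_no_repeat VE H H' lt; rewrite S ltnn.
by have := inv_no_repeat VE H' H lt; rewrite S ltnn.
Qed.

Lemma In_pmap T U (f : T -> option U) L v : List.In v (pmap f L) ->
  exists s, List.In s L /\ f s = Some v.
Proof.
elim: L => [//|s L IH] /=; rewrite /= /pmap /= -/(pmap f L).
case Hs: (f s) => [w|] /=; last by move/IH => [s' [H1 H2]]; exists s'; split => //; right.
by case=> [<-|/IH [s' [H1 H2]]]; [exists s; split => //; left | exists s'; split => //; right].
Qed.

Lemma pmap_In T U (f : T -> option U) L s v : List.In s L -> f s = Some v ->
  List.In v (pmap f L).
Proof.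
elim: L => [//|s' L IH] /= [<- ->|Hin Hf]; first by left.
by case: (f s') => [w|] /=; [right|]; apply: IH.
Qed.

Lemma wvi_some E y i v : wvi E y i = Some v -> exists q, inv_at E i = Some (q, Write y v).
Proof.
rewrite /wvi; case: (inv_at E i) => [[q [x|x w]]|] //.
by case Hr: (reg_eqb y x) => // -[<-]; exists q; rewrite (reg_eqb_eq Hr).
Qed.

Lemma pmap_wv_map E y S : pmap (wv E y) S = pmap (wvi E y) (map fst S).
Proof. by elim: S => [//|s S IH] /=; rewrite /pmap /= -!/(pmap _ _) IH. Qed.

Lemma W3 n A E S y : V n A E -> uniq (map fst S) ->
  (size (pmap (wv E (R1 y)) S) <= 2)%N /\
  (forall v, List.In v (pmap (wv E (R1 y)) S) -> v = VInt 0 \/ v = VInt 1).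
Proof.
move=> VE U; split; last first.
  move=> v Hv; have [s [_ Hs]] := In_pmap Hv; have [q Hq] := wvi_some Hs.
  by case: (W1 VE Hq) => [[_ [-> _]]|[_ [-> _]]]; [left|right].
rewrite pmap_wv_map size_pmap -size_filter.
set J := filter _ _.
have UJ : uniq J by apply: filter_uniq.
pose proc i := if inv_at E i is Some (q, _) then q else 0.
have HJ : forall i, i \in J -> exists q v, inv_at E i = Some (q, Write (R1 y) v).
  move=> i; rewrite mem_filter => /andP [/= Hw _].
  by case Hs: (wvi E (R1 y) i) Hw => [v|] // _; have [q Hq] := wvi_some Hs; exists q, v.
rewrite -(size_map proc); apply: (@uniq_leq_size _ _ [:: 0; 1]).
  rewrite map_inj_in_uniq // => i i' Hi Hi'.
  have [q [v Hq]] := HJ i Hi; have [q' [v' Hq']] := HJ i' Hi'.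
  rewrite /proc Hq Hq' => eq; subst q'; exact: W2 VE Hq Hq'.
move=> x /mapP [i Hi ->]; have [q [v Hq]] := HJ i Hi.
by rewrite /proc Hq; case: (W1 VE Hq) => [[-> _]|[-> _]].
Qed.

Lemma take_rcons_facts (T : seq value) T' v : take (size T').+1 T = rcons T' v ->
  [/\ (size T' < size T)%N, take (size T') T = T' & nth VBot T (size T') = v].
Proof.
move=> H.
have lt : (size T' < size T)%N.
  move: (congr1 size H); rewrite size_take size_rcons.
  case: ltnP => [h _|h ->]; last exact: ltnSn.
  exact: ltn_trans (ltnSn _) h.
split => //.
  by rewrite -(take_takel _ (leqnSn (size T'))) H -cats1 take_size_cat.
by rewrite -(nth_take VBot (ltnSn (size T'))) H nth_rcons ltnn eqxx.
Qed.

Lemma TO' n A E p T' v o : V n A E -> take (size T').+1 (ltrace p E) = rcons T' v ->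
  (prog p T').2 = Invoke o ->
  exists i r, [/\ (i < r)%N, (r < size E)%N, inv_at E i = Some (p, o),
     resp_of E i = Some (r, v)
     & ltrace p (take i E) = T' /\ ltrace p (take r E) = T'].
Proof.
move=> VE /take_rcons_facts [lt Ht Hn] Ha.
have [|i [r [h1 h2 h3 HR [h4 h5]]]] := TO VE lt (o := o); first by rewrite Ht.
by exists i, r; split => //; [rewrite -Hn | rewrite h4 h5 Ht].
Qed.

Definition isjf y (x : nat * action) := (x.1 == y) && (if x.2 is Flip then true else false).
Definition Pflip y E i :=
  (if nth ev0 E i is EFlip 0 _ then true else false) && isjf y (prog 0 (ltrace 0 (take i E))).

Lemma isjfE y x : isjf y x -> x = (y, Flip).
Proof. by case: x => a [o| |]; rewrite /isjf /= ?andbF // => /andP [/eqP -> _]. Qed.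

Lemma W4 n A E i q y w : V n A E -> inv_at E i = Some (q, Write (C1 y) w) ->
  q = 0 /\ exists r b, [/\ (r < i)%N, nth ev0 E r = EFlip 0 b, Pflip y E r
                          & w = VInt (Posz (nat_of_bool b))].
Proof.
move=> VE H; have [_ _ Ha] := V_inv VE H; have iE := inv_at_size H.
case: (ltnP q 2) => [lt|ge]; last first.
  by move: Ha; rewrite prog_ge2 // => /pair_eta; case: (p2_noW 0 (ltrace q (take i E)) (prog2 0 (ltrace q (take i E))).1 y w).
move: Ha; rewrite prog_lt2 // => /pair_eta.
case: q lt H => [|[|]] // _ H; last by move/p1_C1.
move/p0_C1 => [tr' [Htr Hf]]; split => //.
have VE' := V_take (i := i) VE.
have [||r [b [rlt Hr Hv Hlt]]] := TF (p := 0) (l := size tr') VE'.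
- by rewrite Htr size_rcons.
- by rewrite Htr -cats1 take_size_cat // prog_lt2 // Hf.
rewrite size_take iE in rlt.
move: Hr Hv Hlt; rewrite nth_take // take_takel ?(ltnW rlt) // Htr nth_rcons ltnn eqxx -cats1 take_size_cat // => Hr Hv Hlt.
exists r, b; split => //.
by rewrite /Pflip Hr Hlt prog_lt2 // Hf /isjf /= eqxx.
Qed.

Lemma W5 n A E y r r' : V n A E -> Pflip y E r -> Pflip y E r' -> (r < size E)%N -> (r' < size E)%N -> r = r'.
Proof.
move=> VE.
have key : forall r r', Pflip y E r -> Pflip y E r' -> (r < size E)%N -> (r < r')%N -> False.
  move=> a a' /andP [Ha Hj] /andP [_ Hj'] aE lt.
  move: (isjfE Hj) (isjfE Hj'); rewrite !prog_lt2 // => F1 F2.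
  have [s1 _] := p0_flip F1; have [s2 _] := p0_flip F2.
  have := ltrace_take_mono 0 E lt.
  rewrite (take_nth ev0 aE) ltrace_rcons; case: (nth ev0 E a) Ha => // -[|//] b _ /=.
  rewrite size_cat /=; lia.
move=> H1 H2 l1 l2; case: (ltngtP r r') => // lt; exfalso.
  exact: key H1 H2 l1 lt.
exact: key H2 H1 l2 lt.
Qed.

Lemma W6 n A E y : V n A E -> prog 0 (ltrace 0 E) = (y, Flip) ->
  exists i r v, inv_at E i = Some (0, Write (R1 y) (VInt 0)) /\ resp_of E i = Some (r, v).
Proof.
move=> VE; rewrite prog_lt2 // => Hf; have [_ [tr' [x [Ht Hp]]]] := p0_flip Hf.
have [||i [r [_ _ HI HR _]]] := TO' (p := 0) (T' := tr') (v := x) (o := Write (R1 y) (VInt 0)) VE.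
- by rewrite Ht -(size_rcons tr' x) take_size.
- by rewrite prog_lt2 // Hp.
by exists i, r, x.
Qed.

Lemma In_take T (x : T) a S : List.In x (take a S) -> List.In x S.
Proof. by rewrite -{2}(cat_take_drop a S) => H; apply: List.in_or_app; left. Qed.

Lemma In_last T (d : T) W : W <> [::] -> List.In (last d W) W.
Proof.
elim: W d => [//|w W IH] d _ /=.
case: W IH => [|w' W] IH /=; first by left.
by right; apply: IH.
Qed.

Lemma LL T (d u1 : T) W1 W2 W3 : u1 = last d W1 -> u1 <> d -> last d (W1 ++ W2) <> u1 ->
  (size (W1 ++ W2 ++ W3) <= 2)%N -> u1 = head d (W1 ++ W2 ++ W3).
Proof.
move=> H1 H2 H3 Hs.
case: W1 H1 H3 Hs => [|w [|w' W1]] H1 H3 Hs; first by exfalso; apply: H2.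
  by rewrite H1.
case: W2 H3 Hs => [|x W2] H3 Hs.
  by exfalso; apply: H3; rewrite cats0 H1.
by move: Hs; rewrite /= !size_cat /=; lia.
Qed.

Lemma exec_take n A cs k r : is_exec n A (take r (run n A cs k)).
Proof.
case: (leqP r (size (run n A cs k))) => [le|lt].
  by have [t' [_ Ht]] := run_take le; exists cs, t'.
by rewrite take_oversize ?(ltnW lt) //; exists cs, k.
Qed.

Lemma lin_in x E S i p o k v : linearization_on x E S -> inv_at E i = Some (p, o) -> op_reg o = x ->
  resp_of E i = Some (k, v) -> exists a, (a < size S)%N /\ nth (0, VBot) S a = (i, v).
Proof. by move=> [_ _ H3 _ _] Hi Ho Hr; apply: In_nth'; apply: H3 Hi Ho Hr. Qed.

Lemma check_inv u1 u2 c1 : check u1 u2 c1 ->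
  exists x, [/\ u1 = VInt x, c1 = VInt x & u2 <> u1].
Proof.
case: u1 => // a; case: u2 => // b; case: c1 => // c /= /andP [/eqP e1 /eqP e2].
exists a; split => //; first by rewrite e1.
by case=> e; lia.
Qed.

Lemma take_addcat T (a b : seq T) m : take (size a + m) (a ++ b) = a ++ take m b.
Proof. by rewrite takeD take_size_cat // drop_size_cat. Qed.

Lemma CORE n A j (fR1 fC1 fR2 : seq event -> seq (nat * value)) cs k :
  (forall E, is_exec n A E -> linearization_on (R1 j) E (fR1 E)) ->
  (forall G H, is_exec n A G -> is_exec n A H -> (exists s, H = G ++ s) -> exists s', fR1 H = fR1 G ++ s') ->
  (forall E, is_exec n A E -> linearization_on (C1 j) E (fC1 E)) ->
  (forall E, is_exec n A E -> linearization_on (R2 j) E (fR2 E)) ->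
  entered n (run n A cs k) j.+1 ->
  exists r b, [/\ (r < size (run n A cs k))%N, Pflip j (run n A cs k) r, nth ev0 (run n A cs k) r = EFlip 0 b &
     head VBot (pmap (wv (take r (run n A cs k)) (R1 j)) (fR1 (take r (run n A cs k)))) = VInt (Posz (nat_of_bool b))].
Proof.
move=> LR1 PR1 LC1 LR2.
set H := run n A cs k.
have VH : V n A H := @Vc_V n A cs _ (@Vc_run n A cs k).
have XH : is_exec n A H by exists cs, k.
move=> /existsP [p Hp].
have [q [l [w [q2 qn lle Hw]]]] : exists q l w, [/\ (2 <= q)%N, (q < n)%N, (l <= size (ltrace q H))%N &
    (prog2 0 (take l (ltrace q H))).2 = Invoke (Write (R2 j) w)].
  case: (ltnP p 2) => [p2|p2].
  - move: Hp; rewrite prog_lt2 // => Hp.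
    have [l0 [l0lt Ha Hnf]] := p01_round (leq0n j) Hp.
    have [|i [r [_ _ HI HR _]]] := TO VH l0lt (o := Read (R2 j)); first by rewrite prog_lt2.
    have [a [alt Ha']] := lin_in (LR2 _ XH) HI erefl HR.
    have [_ _ _ _ Hleg] := LR2 _ XH.
    have := LEG Hleg alt Ha' HI.
    set L := pmap _ _ => Hv.
    have LN : L <> [::] by move=> E0; move: Hnf; rewrite Hv E0.
    have [s [Hs Hws]] := In_pmap (In_last VBot LN).
    have [q HIq] := wvi_some Hws.
    have [qn _ Haq] := V_inv VH HIq.
    exists q, (size (ltrace q (take s.1 H))), (last VBot L).
    case: (ltnP q 2) => [q2|q2].
      by move: Haq; rewrite prog_lt2 // => /pair_eta /p01_R2.
    split => //.
    - by rewrite -{2}(cat_take_drop s.1 H) ltrace_cat size_cat leq_addr.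
    - by rewrite -ltrace_take_prefix -(prog_ge2 _ q2).
  - have [|l [w [llt Hl]]] := p2_round (leq0n j) (tr := ltrace p H); first by rewrite -(prog_ge2 _ p2).
    by exists p, l, w; split => //; apply: ltnW.
have [t3 [u1 [u2 [c1 [Ht Ha1 Ha2 Ha3 Hc]]]]] := p2_R2 (pair_eta Hw).
have Tpre : forall m, (m <= 3)%N -> take (size t3 + m) (ltrace q H) = t3 ++ take m [:: u1; u2; c1].
  move=> m le; rewrite -take_addcat -Ht take_takel //.
  have : size (take l (ltrace q H)) = (size t3 + 3)%N by rewrite Ht size_cat.
  rewrite size_takel // => ->; lia.
have [||i1 [r1 [ir1 r1H HI1 HR1 [Hi1 Hr1]]]] := TO' (p := q) (T' := t3) (v := u1) (o := Read (R1 j)) VH.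
- by rewrite -addn1 Tpre ?cats1 //; lia.
- by rewrite prog_ge2.
have [||i2 [r2 [ir2 r2H HI2 HR2 [Hi2 Hr2]]]] := TO' (p := q) (T' := t3 ++ [:: u1]) (v := u2) (o := Read (R1 j)) VH.
- by rewrite size_cat -addn1 -addnA Tpre -?cats1 -?catA //; lia.
- by rewrite prog_ge2.
have [||i3 [r3 [ir3 r3H HI3 HR3 [Hi3 Hr3]]]] := TO' (p := q) (T' := t3 ++ [:: u1; u2]) (v := c1) (o := Read (C1 j)) VH.
- by rewrite size_cat -addn1 -addnA Tpre -?cats1 -?catA //; lia.
- by rewrite prog_ge2.
have r1i2 : (r1 < i2)%N.
  rewrite ltnNge; apply/negP => le; have := ltrace_take_mono q H le.
  by rewrite Hi2 Hr1 size_cat /= addn1 ltnn.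
have [x [Eu1 Ec1 Nu2]] := check_inv Hc.
have L1 := LR1 _ XH; have [U1 _ _ _ Leg1] := L1.
have [a1 [a1lt Ha1']] := lin_in L1 HI1 erefl HR1.
have [a2 [a2lt Ha2']] := lin_in L1 HI2 erefl HR2.
have a12 := RT L1 a1lt a2lt Ha1' Ha2' HR1 ir1 r1i2.
have Lu1 := LEG Leg1 a1lt Ha1' HI1.
have Lu2 := LEG Leg1 a2lt Ha2' HI2.
have [W3s W3v] := @W3 n A H (fR1 H) j VH U1.
have Hu1 : u1 = head VBot (pmap (wv H (R1 j)) (fR1 H)).
  have e2 : take a2 (fR1 H) = take a1 (fR1 H) ++ take (a2 - a1) (drop a1 (fR1 H)).
    by rewrite -takeD subnKC // ltnW.
  rewrite -(cat_take_drop a2 (fR1 H)) e2 -catA !pmap_cat.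
  apply: LL => //; first by rewrite Eu1.
  - by rewrite -pmap_cat -e2 /= -Lu2.
  - by rewrite -!pmap_cat catA -e2 cat_take_drop.
have u1v : u1 = VInt 0 \/ u1 = VInt 1.
  apply: W3v; rewrite Hu1; case E: (pmap _ _) => [|w0 W'] /=; last by left.
  by move: Hu1; rewrite E Eu1.
have L3 := LC1 _ XH; have [_ _ _ _ Leg3] := L3.
have [a3 [a3lt Ha3']] := lin_in L3 HI3 erefl HR3.
have := LEG Leg3 a3lt Ha3' HI3; set L := pmap _ _ => Lc1.
have LN : L <> [::].
  move=> E0; move: Lc1; rewrite E0 /= Ec1 => -[ex].
  by case: u1v; rewrite Eu1 => -[]; rewrite ex.
have [s [Hs Hws]] := In_pmap (In_last VBot LN).
have [q' HIq] := wvi_some Hws.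
have [_ [r [b [rs Hr HP Hb]]]] := W4 VH HIq.
have sH := inv_at_size HIq.
have rH : (r < size H)%N by apply: ltn_trans rs sH.
exists r, b; split => //.
set E0 := take r H.
have VE0 : V n A E0 := V_take VH.
have X0 : is_exec n A E0 by apply: exec_take.
move: HP => /andP [_ /isjfE HP].
have [i0 [r0 [v0 [HI0 HR0]]]] := W6 VE0 HP.
have L0 := LR1 _ X0.
have [a0 [a0lt Ha0]] := lin_in L0 HI0 erefl HR0.
have In0 : List.In (i0, v0) (fR1 E0) by rewrite -Ha0; apply: nth_In'.
have NE0 : pmap (wv E0 (R1 j)) (fR1 E0) <> [::].
  have : List.In (VInt 0) (pmap (wv E0 (R1 j)) (fR1 E0)).
    by apply: pmap_In In0 _; rewrite /wv /wvi /= HI0 /= eqxx.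
  by case: (pmap _ _).
have [s' Hs'] : exists s', fR1 H = fR1 E0 ++ s'.
  by apply: PR1 => //; exists (drop r H); rewrite cat_take_drop.
have [_ C2 _ _ _] := L0.
have sz : forall i v, List.In (i, v) (fR1 E0) -> (i < size E0)%N.
  by move=> i v /C2 [p' [o' [Hi _]]]; apply: inv_at_size Hi.
have : head VBot (pmap (wv H (R1 j)) (fR1 H)) = head VBot (pmap (wv E0 (R1 j)) (fR1 E0)).
  have eqX : pmap (wv H (R1 j)) (fR1 E0) = pmap (wv E0 (R1 j)) (fR1 E0).
    by rewrite -(pmap_wv_cat (drop r H) _ sz) /E0 cat_take_drop.
  rewrite Hs' pmap_cat eqX.
  by case: (pmap _ (fR1 E0)) NE0.
move=> <-; rewrite -Hu1 Eu1 -Ec1.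
have lastD : forall T (d d' : T) L, L <> [::] -> last d L = last d' L by move=> T d d' [].
by rewrite Lc1 (lastD _ _ VBot _ LN) Hb.
Qed.

Definition tog (m : nat) (s : seq bool) : seq bool :=
  mkseq (fun i => nth false s i (+) (i == m)) (size s).

Lemma size_tog m s : size (tog m s) = size s.
Proof. by rewrite size_mkseq. Qed.

Lemma nth_tog m s i : nth false (tog m s) i = nth false s i (+) ((i == m) && (i < size s)%N).
Proof.
rewrite /tog; case: (ltnP i (size s)) => h; first by rewrite nth_mkseq // andbT.
by rewrite !nth_default ?size_mkseq // andbF.
Qed.

Lemma tog_tog m s : tog m (tog m s) = s.
Proof.
apply: (@eq_from_nth _ false); first by rewrite !size_tog.
by move=> i _; rewrite !nth_tog size_tog addbK.
Qed.

Definition posf j (H : seq event) := find (Pflip j H) (iota 0 (size H)).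

Lemma posfE n A j H r : V n A H -> Pflip j H r -> (r < size H)%N -> posf j H = r.
Proof.
move=> VH Pr rH.
have hs : has (Pflip j H) (iota 0 (size H)).
  by apply/hasP; exists r => //; rewrite mem_iota.
have flt : (find (Pflip j H) (iota 0 (size H)) < size H)%N.
  by rewrite -{2}(size_iota 0 (size H)) -has_find.
have := nth_find 0 hs; rewrite nth_iota // add0n => Pf.
exact: W5 VH Pf Pr flt rH.
Qed.

Lemma flipside n A j (fR1 fC1 fR2 : seq event -> seq (nat * value)) (cs : seq bool) k :
  (forall E, is_exec n A E -> linearization_on (R1 j) E (fR1 E)) ->
  (forall G H, is_exec n A G -> is_exec n A H -> (exists s, H = G ++ s) -> exists s', fR1 H = fR1 G ++ s') ->
  (forall E, is_exec n A E -> linearization_on (C1 j) E (fC1 E)) ->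
  (forall E, is_exec n A E -> linearization_on (R2 j) E (fR2 E)) ->
  size cs = k ->
  entered n (run n A cs k) j.+1 ->
  let H := run n A cs k in
  let m := count is_flip (take (posf j H) H) in
  let H' := run n A (tog m cs) k in
  [/\ (posf j H < size H)%N, ~~ entered n H' j.+1, posf j H' = posf j H,
     (posf j H < size H')%N & count is_flip (take (posf j H) H') = m].
Proof.
move=> LR1 PR1 LC1 LR2 szk bad; cbv zeta.
have [r [b [rH Pr Hr Ha]]] := CORE LR1 PR1 LC1 LR2 bad.
set H := run n A cs k in rH Pr Hr Ha *.
have VH : V n A H := @Vc_V n A cs _ (@Vc_run n A cs k).
have pr : posf j H = r := posfE VH Pr rH.
rewrite pr.
set E0 := take r H.
have sE0 : size E0 = r by rewrite size_takel // ltnW.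
have [t0 [t0k Ht0]] := run_take (ltnW rH).
have t0lt : (t0 < k)%N.
  rewrite ltn_neqAle t0k andbT; apply/negP => /eqP e.
  move: Ht0; rewrite e -/H => /(congr1 size); rewrite size_takel ?(ltnW rH) // => ez.
  by move: rH; rewrite -ez ltnn.
have mk : (count is_flip E0 < k)%N.
  by apply: leq_ltn_trans (count_size _ _) _; rewrite sE0; apply: leq_trans rH (size_run _ _ _ _).
set m' := count is_flip E0.
set H' := run n A (tog m' cs) k.
have VH' : V n A H' := @Vc_V n A _ _ (@Vc_run n A (tog m' cs) k).
have Vc0 := @Vc_run n A cs k r rH; rewrite -/E0 -/m' in Vc0.
have bm : b = nth false cs m' by have := NE Vc0; rewrite Hr => -[_ [_ [_ ->]]].
have flipall : forall b', next_event n A E0 b' = Some (EFlip 0 b').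
  move=> b'; case: (ND n A E0) => [Hb|[p Hp]].
    by have := NE (etrans (Hb b' _) Vc0); rewrite Hr => -[_ [_ [_ eb]]]; rewrite (Hb b' (nth false cs m')) Vc0 Hr eb.
  by move: Vc0; rewrite Hp Hr => -[ep _]; rewrite Hp ep.
have R0 : run n A (tog m' cs) t0 = E0.
  have Ht0' : run n A cs t0 = E0 by rewrite Ht0.
  rewrite -Ht0'; symmetry; apply: run_agree => i; rewrite Ht0' => lt.
  by rewrite nth_tog (ltn_eqF lt) andFb addbF.
have R1' : run n A (tog m' cs) t0.+1 = rcons E0 (EFlip 0 (~~ b)).
  rewrite run_S /= R0 flipall nth_tog eqxx szk mk /= bm.
  by rewrite addbT.
have [s2 Hs2] := @run_prefix n A (tog m' cs) t0.+1 k t0lt.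
rewrite R1' in Hs2.
have tH' : take r H' = E0 by rewrite /H' Hs2 -cats1 -catA take_size_cat.
have nH' : nth ev0 H' r = EFlip 0 (~~ b) by rewrite /H' Hs2 -cats1 -catA nth_cat sE0 ltnn subnn.
have rH' : (r < size H')%N by rewrite /H' Hs2 size_cat size_rcons sE0; lia.
have Pr' : Pflip j H' r.
  by move: Pr; rewrite /Pflip nH' tH' Hr.
have pr' : posf j H' = r := posfE VH' Pr' rH'.
split => //; last by rewrite tH'.
apply/negP => bad'.
have [r' [b' [rH'' Pr'' Hr'' Ha']]] := CORE LR1 PR1 LC1 LR2 bad'.
have e := W5 VH' Pr'' Pr' rH'' rH'; subst r'.
move: Hr''; rewrite nH' => -[eb]; subst b'.
move: Ha'; rewrite tH' -/E0 Ha => -[].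
by case: b {Hr Ha bm R1' Hs2 nH' Pr' tH'}.
Qed.


Unset Implicit Arguments.
Local Open Scope ring_scope.

Lemma togt_size k m (cs : k.-tuple bool) : size (tog m cs) == k.
Proof. by rewrite size_tog size_tuple. Qed.
Definition togt k m (cs : k.-tuple bool) : k.-tuple bool := Tuple (@togt_size k m cs).

Lemma count_half (T : finType) (bad : pred T) (g : T -> T) :
  (forall x, bad x -> ~~ bad (g x) /\ g (g x) = x) -> (#|bad| <= #|predC bad|)%N.
Proof.
move=> Hg.
have inj : {in bad &, injective g}.
  by move=> x y Hx Hy e; rewrite -(Hg x Hx).2 -(Hg y Hy).2 e.
rewrite -(card_in_imset inj); apply: subset_leq_card.
apply/subsetP => y /imsetP [x Hx ->]; rewrite inE /=; exact: (Hg x Hx).1.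
Qed.

Theorem lemma2 (n : nat) (A : strategy) :
  (3 <= n)%N -> registers_strongly_linearizable n A ->
  forall j k : nat, 1 / 2 <= prob_none_within n A j k.
Proof.
move=> _ SL j k.
have [fR1 [LR1 PR1]] := SL (R1 j).
have [fC1 [LC1 _]] := SL (C1 j).
have [fR2 [LR2 _]] := SL (R2 j).
pose bad := [pred cs : k.-tuple bool | entered n (run n A cs k) j.+1].
pose g (cs : k.-tuple bool) : k.-tuple bool :=
  if (posf j (run n A cs k) < size (run n A cs k))%N
  then togt _ (count is_flip (take (posf j (run n A cs k)) (run n A cs k))) cs else cs.
have Hg : forall cs, bad cs -> ~~ bad (g cs) /\ g (g cs) = cs.
  move=> cs Hb.
  have [h1 h2 h3 h4 h5] := flipside LR1 PR1 LC1 LR2 (size_tuple cs) Hb.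
  rewrite /g h1; split; first exact: h2.
  rewrite /= h3 h4 h5; apply: val_inj; by rewrite /= tog_tog.
have le := count_half _ _ _ Hg.
have tot := cardC bad; rewrite card_tuple card_bool in tot.
rewrite /prob_none_within.
have -> : #|[pred cs : k.-tuple bool | ~~ entered n (run n A cs k) j.+1]| = #|predC bad|.
  by apply: eq_card => cs.
have e : #|[predC bad]| = #|predC bad| by apply: eq_card.
have h2 : (2 ^ k <= 2 * #|predC bad|)%N.
  rewrite -tot mul2n -addnn; apply: leq_add; [exact: le | by rewrite e].
have h2' : (2 ^ k)%:R <= 2 * (#|predC bad|)%:R :> rat.
  by rewrite -(natrM _ 2) ler_nat.
rewrite ler_pdivlMr ?ltr0n ?expn_gt0 //.
lra.
Qed.
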